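(* Let $M$ be an Orlicz function satisfying the $\Delta_2^\infty$-condition, and let $\phi_U(n):=\|\sum_{k=1}^ne_k\|_{(L_M)_U}$, $n\in\mathbb N$, where $e_k$ are the canonical unit vectors. Then $\phi_U(n)\asymp\Phi_{M^{-1}}(n)$, $n\in\mathbb N$, with constants independent of $n$, where $M^{-1}$ is the inverse function of $M$.
   Context: An Orlicz function is an increasing convex continuous $M:[0,\infty)\to[0,\infty)$ with $M(0)=0$, $M(t)\to\infty$, normalized by $M(1)=1$ (assumed strictly increasing so $M^{-1}$ exists); $M\in\Delta_2^\infty$ means $\sup_{u\ge1}M(2u)/M(u)<\infty$. $L_M=L_M[0,1]$ (Lebesgue measure) has the Luxemburg norm $\|f\|_{L_M}:=\inf\{\lambda>0:\int_0^1M(|f|/\lambda)\le1\}$. For a Banach lattice $X$, $\mathfrak B_n(X)$ is the set of $n$-tuples of pairwise disjoint norm-one elements; $\|a\|_{X_U(n)}:=\sup\{\|\sum_{i=1}^na_ix_i\|_X:(x_i)\in\mathfrak B_n(X)\}$, and $X_U$ is the space of real sequences with $\|a\|_{X_U}:=\sup_n\|(a_i)_{i=1}^n\|_{X_U(n)}<\infty$. For $g:(0,\infty)\to(0,\infty)$, $\Phi_g(u):=\sup_{v\ge\max(1,1/u)}g(vu)/g(v)$, $u>0$. $F\asymp G$ means $c^{-1}G\le F\le cG$ for a constant $c$. *)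

(* Defs.v *)
From HB Require Import structures.
From mathcomp Require Import all_boot all_order all_algebra.
From mathcomp Require Import all_classical all_reals all_analysis.
Set Implicit Arguments. Unset Strict Implicit. Unset Printing Implicit Defensive.
Import Order.TTheory GRing.Theory Num.Theory.
Import numFieldNormedType.Exports.
Local Open Scope classical_set_scope.
Local Open Scope ring_scope.

Section Orlicz.
Variable R : realType.

Definition orlicz_function (M : R -> R) : Prop :=
  [/\ (forall x y, 0 <= x -> x < y -> M x < M y),
      ((forall x y t, 0 <= x -> 0 <= y -> 0 <= t <= 1 ->
         M (t * x + (1 - t) * y) <= t * M x + (1 - t) * M y) /\
      {within `[0, +oo[, continuous M}),
      M 0 = 0,
      M x @[x --> +oo] --> +oo
    & M 1 = 1].

Definition Delta2_infty (M : R -> R) : Prop :=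
  exists C : R, forall u, 1 <= u -> M (2 * u) <= C * M u.

Definition is_inverse_on_nonneg (M Minv : R -> R) : Prop :=
  forall t, 0 <= t -> [/\ 0 <= Minv t, Minv (M t) = t & M (Minv t) = t].

Definition mu := (@lebesgue_measure R).

Definition modular_le1 (M : R -> R) (f : R -> R) (l : R) : Prop :=
  (\int[mu]_(x in (`[0%R, 1%R] : set R)) (M (`|f x| / l))%:E <= 1)%E.

(* f is (a representative of) an element of L_M[0,1] *)
Definition in_LM (M : R -> R) (f : R -> R) : Prop :=
  measurable_fun (`[0%R, 1%R] : set R) f /\ exists l, 0 < l /\ modular_le1 M f l.

Definition lux_norm (M : R -> R) (f : R -> R) : R :=
  inf [set l : R | 0 < l /\ modular_le1 M f l].

Definition disjoint_normalized (M : R -> R) (n : nat) (xs : 'I_n -> R -> R)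
  : Prop :=
  (forall i, in_LM M (xs i) /\ lux_norm M (xs i) = 1) /\
  (forall i j : 'I_n, i != j ->
     mu.-negligible [set x : R | (0 <= x <= 1) /\ xs i x != 0 /\ xs j x != 0]).

(* ||(a_i)_{i<n}||_{X_U(n)} for X = L_M  (indices shifted to 0..n-1) *)
Definition XU_n_norm (M : R -> R) (n : nat) (a : nat -> R) : \bar R :=
  ereal_sup [set (lux_norm M (fun x => \sum_(i < n) a i * xs i x))%:E
            | xs in [set xs | disjoint_normalized M xs]].

Definition XU_norm (M : R -> R) (a : nat -> R) : \bar R :=
  ereal_sup (range (fun m => XU_n_norm M m a)).

Definition phi_U (M : R -> R) (n : nat) : \bar R :=
  XU_norm M (fun i => if (i < n)%N then 1 else 0).

Definition Phi (g : R -> R) (u : R) : \bar R :=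
  ereal_sup [set (g (v * u) / g v)%:E | v in [set v | Num.max 1 u^-1 <= v]].

End Orlicz.

(* Main.v *)
Require Import Defs.
From HB Require Import structures.
From mathcomp Require Import all_boot all_order all_algebra.
From mathcomp Require Import all_classical all_reals all_analysis.
From mathcomp Require Import ring lra.
From mathcomp Require Import measurable_realfun.
From mathcomp Require Import zify.
Import Order.TTheory GRing.Theory Num.Theory.
Import numFieldNormedType.Exports.
Local Open Scope classical_set_scope.
Local Open Scope ring_scope.
Set Implicit Arguments. Unset Strict Implicit. Unset Printing Implicit Defensive.
Lemma Mmono (R : realType) (M : R -> R) : orlicz_function M ->
  forall x y, 0 <= x -> x <= y -> M x <= M y.
Proof.
case=> inc _ _ _ _ x y x0; rewrite le_eqVlt => /orP[/eqP->//|xy].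
exact/ltW/inc.
Qed.

Lemma Mge0 (R : realType) (M : R -> R) : orlicz_function M ->
  forall x, 0 <= x -> 0 <= M x.
Proof.
move=> oM x x0; have := Mmono oM (lexx 0) x0.
by case: oM => _ _ -> _ _.
Qed.

Lemma Mhalf (R : realType) (M : R -> R) : orlicz_function M ->
  forall y, 0 <= y -> M (y / 2) <= M y / 2.
Proof.
case=> _ [cv _] M0 _ _ y y0.
have := cv y 0 (2^-1) y0 (lexx 0).
rewrite invr_ge0 ler0n /= invf_le1 ?ler1n // => /(_ isT).
by rewrite mulr0 addr0 M0 mulr0 addr0 mulrC [M y * _]mulrC.
Qed.

Lemma Mlt_inv (R : realType) (M Minv : R -> R) : orlicz_function M ->
  is_inverse_on_nonneg M Minv ->
  forall x t, 0 <= x -> 0 <= t -> M x <= t -> x <= Minv t.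
Proof.
move=> oM iM x t x0 t0 Mxt; rewrite leNgt; apply/negP => tx.
have [Mi0 _ MMi] := iM t t0.
have := (let: And5 inc _ _ _ _ := oM in inc) _ _ Mi0 tx.
by rewrite MMi ltNge Mxt.
Qed.

Lemma Minv_gt0 (R : realType) (M Minv : R -> R) : orlicz_function M ->
  is_inverse_on_nonneg M Minv -> forall t, 0 < t -> 0 < Minv t.
Proof.
move=> oM iM t t0; have [Mi0 _ MMi] := iM t (ltW t0).
rewrite lt_def Mi0 andbT; apply/eqP => h.
by move: MMi; rewrite h; case: oM => _ _ -> _ _ => /eqP; rewrite eq_sym gt_eqF.
Qed.

Lemma Minv1 (R : realType) (M Minv : R -> R) : orlicz_function M ->
  is_inverse_on_nonneg M Minv -> Minv 1 = 1.
Proof. by move=> oM iM; have [_ + _] := iM 1 ler01; case: oM => _ _ _ _ ->. Qed.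
Lemma key_pt (R : realType) (M Minv : R -> R) (n : nat) (r : R) :
  orlicz_function M -> is_inverse_on_nonneg M Minv -> (1 <= n)%N -> 0 < r ->
  (forall w, 1 <= w -> Minv (w * n%:R) / Minv w <= r) ->
  forall t, 0 <= t -> M (t / (4 * r)) <= (M (t / 2) / n%:R + 1) / 2.
Proof.
move=> oM iM n1 r0 hr t t0.
have n0 : 0 < n%:R :> R by rewrite ltr0n.
set u := t / 2.
have u0 : 0 <= u by rewrite /u divr_ge0.
have ur0 : 0 <= u / r by rewrite divr_ge0 // ltW.
have -> : t / (4 * r) = (u / r) / 2.
  by rewrite /u -!mulrA; congr (_ * _); rewrite -!invfM; congr (_^-1); ring.
apply: le_trans (Mhalf oM ur0) _.
rewrite ler_pM2r ?invr_gt0 ?ltr0n //.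
have Mu0 := Mge0 oM u0.
case: (lerP n%:R (M u)) => hn.
- set w := M u / n%:R.
  have w1 : 1 <= w by rewrite /w ler_pdivlMr // mul1r.
  have w0 : 0 < w by apply: lt_le_trans w1.
  have hw := hr w w1.
  have [_ Mu _] := iM u u0.
  rewrite /w mulfVK ?gt_eqF // Mu in hw.
  have Mw0 := Minv_gt0 oM iM w0.
  have : u / r <= Minv w.
    by rewrite ler_pdivrMr // mulrC -ler_pdivrMr.
  move=> /(Mmono oM ur0); have [_ _ ->] := iM w (ltW w0).
  by move=> h; apply: le_trans h _; rewrite lerDl.
- have : u <= Minv n%:R by apply: (Mlt_inv oM iM u0 (ltW n0) (ltW hn)).
  have hn1 := hr 1 (lexx 1).
  rewrite mul1r (Minv1 oM iM) divr1 in hn1.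
  move=> h; have ur1 : u / r <= 1 by rewrite ler_pdivrMr // mul1r (le_trans h).
  apply: le_trans (Mmono oM ur0 ur1) _.
  rewrite (let: And5 _ _ _ _ M1 := oM in M1) lerDr divr_ge0 //; exact: ltW.
Qed.
Lemma meas_Mcomp (R : realType) (M : R -> R) (D : set R) (h : R -> R) (l : R) :
  orlicz_function M -> 0 <= l -> measurable D -> measurable_fun D h ->
  measurable_fun D (fun x => (M (`|h x| / l))%:E).
Proof.
move=> oM l0 mD mh; apply/measurable_EFinP.
pose g := fun y : R => M (Num.max y 0).
have gnd : nondecreasing_fun g.
  move=> x y xy; rewrite /g; apply: (Mmono oM); first by rewrite le_max lexx orbT.
  by rewrite ge_max !le_max xy lexx /= orbT.
have -> : (fun x => M (`|h x| / l)) = g \o (fun x => `|h x| / l).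
  apply/funext => x /=; rewrite /g max_l //.
  by rewrite divr_ge0.
apply: measurableT_comp; first exact: nondecreasing_measurable.
apply: measurable_funM; last exact: measurable_cst.
exact: measurableT_comp.
Qed.
Lemma mod_mono (R : realType) (M : R -> R) (f : R -> R) (l l' : R) :
  orlicz_function M -> measurable_fun (`[0%R, 1%R] : set R) f -> 0 < l -> l <= l' ->
  modular_le1 M f l -> modular_le1 M f l'.
Proof.
move=> oM mf l0 ll' h; rewrite /modular_le1; apply: le_trans h.
have l'0 : 0 < l' by apply: lt_le_trans ll'.
apply: ge0_le_integral => //.
- by move=> x _; rewrite lee_fin; apply: (Mge0 oM); rewrite divr_ge0 // ltW.
- by apply: meas_Mcomp => //; exact: ltW.
- by apply: meas_Mcomp => //; exact: ltW.
- move=> x _; rewrite lee_fin; apply: (Mmono oM); first by rewrite divr_ge0 // ltW.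
  by apply: ler_wpM2l => //; rewrite lef_pV2.
Qed.

Lemma norm1_mod2 (R : realType) (M : R -> R) (f : R -> R) :
  orlicz_function M -> in_LM M f -> lux_norm M f = 1 -> modular_le1 M f 2.
Proof.
move=> oM [mf [l [l0 hl]]] n1.
have : inf [set l : R | 0 < l /\ modular_le1 M f l] < 2.
  by rewrite -/(lux_norm M f) n1 ltr1n.
case/inf_lt; first by exists l.
move=> y [y0 hy] y2; apply: mod_mono hy => //; exact: ltW.
Qed.
Lemma one_nz (R : realType) (m : nat) (y c : 'I_m -> R) (phi : R -> R) :
  phi 0 = 0 -> (forall i, 0 <= c i) ->
  (forall i, y i != 0 -> phi (y i) <= c i) ->
  (forall i j, i != j -> y i != 0 -> y j = 0) ->
  phi (\sum_i y i) <= \sum_i c i.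
Proof.
move=> phi0 c0 hc hd.
case: (pselect (exists k, y k != 0)) => [[k yk]|h].
- rewrite (bigD1 k) //= big1 ?addr0; last by move=> i ik; apply: (hd k) => //; rewrite eq_sym.
  apply: le_trans (hc k yk) _.
  by rewrite (bigD1 k) //= lerDl sumr_ge0.
- rewrite big1 ?phi0 ?sumr_ge0 // => i _.
  by apply/eqP; apply/negP => /negP yi; apply: h; exists i.
Qed.

Lemma sum_ind (R : realType) (m n : nat) :
  \sum_(i < m) ((if (i < n)%N then 1 else 0) : R) = (minn m n)%:R.
Proof.
elim: m => [|m IH]; first by rewrite big_ord0 min0n.
rewrite big_ord_recr /= IH; case: ltnP => h.
- by rewrite natr1; congr (_%:R); lia.
- by rewrite addr0; congr (_%:R); lia.
Qed.
Lemma upper (R : realType) (M Minv : R -> R) (n : nat) (r : R) (m : nat)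
  (xs : 'I_m -> R -> R) :
  orlicz_function M -> is_inverse_on_nonneg M Minv -> (1 <= n)%N -> 0 < r ->
  (forall w, 1 <= w -> Minv (w * n%:R) / Minv w <= r) ->
  disjoint_normalized M xs ->
  lux_norm M (fun x => \sum_(i < m) (if (i < n)%N then 1 else 0) * xs i x) <= 4 * r.
Proof.
move=> oM iM n1 r0 hr [hn hdis].
set a := fun i : 'I_m => (if (i < n)%N then 1 else 0 : R).
set f := fun x => \sum_(i < m) a i * xs i x.
have a01 i : a i = 0 \/ a i = 1 by rewrite /a; case: ifP; [right|left].
have a0 i : 0 <= a i by case: (a01 i) => ->.
have mxs i : measurable_fun (`[0%R, 1%R] : set R) (xs i) := (hn i).1.1.
have h2 i : modular_le1 M (xs i) 2 := norm1_mod2 oM (hn i).1 (hn i).2.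
have r4 : 0 < 4 * r by rewrite mulr_gt0.
have n0 : 0 < n%:R :> R by rewrite ltr0n.
have mD : measurable (`[0%R, 1%R] : set R) by exact: measurable_itv.
have mf : measurable_fun (`[0%R, 1%R] : set R) f.
  by apply: measurable_sum => i; apply: measurable_funM => //; exact: measurable_cst.
have Mi0 i x : 0 <= M (`|xs i x| / 2) by apply: (Mge0 oM); rewrite divr_ge0.
suff hf : modular_le1 M f (4 * r).
  apply: (ge_inf _ (conj r4 hf)).
  by exists 0 => y [y0 _]; exact: ltW.
rewrite /modular_le1.
pose G := fun x => ((2^-1 * n%:R^-1)%:E *
   (\sum_(i < m) (a i * M (`|xs i x| / 2))%:E) + (2^-1)%:E)%E.
have mG i : measurable_fun (`[0%R, 1%R] : set R) (fun x => (a i * M (`|xs i x| / 2))%:E).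
  apply/measurable_EFinP; apply: measurable_funM; first exact: measurable_cst.
  by apply/measurable_EFinP; apply: meas_Mcomp.
have G0i i x : (0 <= (a i * M (`|xs i x| / 2))%:E)%E by rewrite lee_fin mulr_ge0.
have HI : (\int[@mu R]_(x in (`[0%R, 1%R] : set R)) (M (`|f x| / (4 * r)))%:E <=
   \int[@mu R]_(x in (`[0%R, 1%R] : set R)) G x)%E.
  apply: ae_ge0_le_integral => //.
    + by move=> x _; rewrite lee_fin; apply: (Mge0 oM); rewrite divr_ge0 // ltW.
    + by apply: meas_Mcomp => //; exact: ltW.
    + move=> x _; rewrite /G adde_ge0 // ?lee_fin ?invr_ge0 ?ler0n //.
      by apply: mule_ge0; [rewrite lee_fin mulr_ge0 // invr_ge0 ler0n|apply: sume_ge0].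
    + apply: emeasurable_funD; last exact: measurable_cst.
      by apply: measurable_funeM; apply: emeasurable_sum.
    + have hae : \forall x \near almost_everywhere (@mu R),
         forall ij : 'I_m * 'I_m, ij.1 != ij.2 ->
         ~ (0 <= x <= 1 /\ xs ij.1 x != 0 /\ xs ij.2 x != 0).
        apply: filter_forall => -[i j] /=.
        case: (eqVneq i j) => [->|ij]; first by apply: nearW.
        case: (hdis i j ij) => N [mN N0 sub]; exists N; split => // x /= hx.
        apply: sub; apply: contrapT => nA; apply: hx => _; exact: nA.
      have FF : Filter (almost_everywhere (@lebesgue_measure R)) := ae_filter_ringOfSetsType _.
      apply: (filterS (F := almost_everywhere (@lebesgue_measure R))) hae => x hx Dx.
      move: Dx; rewrite /= in_itv /= => Dx.
      rewrite /G sumEFin -EFinM -EFinD lee_fin.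
      apply: le_trans (key_pt oM iM n1 r0 hr (normr_ge0 (f x))) _.
      have hs : M (`|f x| / 2) <= \sum_i a i * M (`|xs i x| / 2).
        apply: (one_nz (phi := fun t => M (`|t| / 2))).
        * by rewrite normr0 mul0r; case: oM => _ _ -> _ _.
        * by move=> i; rewrite mulr_ge0.
        * move=> i; case: (a01 i) => ->; first by rewrite mul0r eqxx.
          by rewrite !mul1r.
        * move=> i j ij; case: (eqVneq (xs i x) 0) => [->|xi0]; first by rewrite mulr0 eqxx.
          case: (eqVneq (xs j x) 0) => [->|xj0]; first by rewrite mulr0.
          by move=> _; exfalso; apply: (hx (i, j)) => //=; split.
      set S := \sum_i _ in hs; set A := M _ in hs.
      have k0 : 0 <= n%:R^-1 :> R by rewrite invr_ge0 ler0n.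
      move: k0 hs; set k := n%:R^-1; move=> k0 hs.
      rewrite -/A -/S.
      nra.
apply: le_trans HI _.
have mS : measurable_fun (`[0%R, 1%R] : set R)
    (fun x => \sum_(i < m) (a i * M (`|xs i x| / 2))%:E)%E.
  exact: emeasurable_sum.
have S0 x : (0 <= \sum_(i < m) (a i * M (`|xs i x| / 2))%:E)%E.
  exact: sume_ge0.
have k0 : 0 <= 2^-1 / n%:R :> R by rewrite mulr_ge0 // invr_ge0 ler0n.
have c0 : forall x : R, [set` `[0%R, 1%R]] x -> (0 <= (fun _ : R => (2^-1 : R)%:E) x)%E.
  by move=> x _; rewrite lee_fin invr_ge0 ler0n.
have kS0 : forall x : R, [set` `[0%R, 1%R]] x -> (0 <= (fun x =>
    (2^-1 / n%:R)%:E * \sum_(i < m) (a i * M (`|xs i x| / 2))%:E) x)%E.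
  by move=> x _; apply: mule_ge0 => //; rewrite lee_fin.
have -> : (\int[@mu R]_(x in (`[0%R, 1%R] : set R)) G x =
    \int[@mu R]_(x in (`[0%R, 1%R] : set R))
       ((2^-1 / n%:R)%:E * \sum_(i < m) (a i * M (`|xs i x| / 2))%:E) +
    \int[@mu R]_(x in (`[0%R, 1%R] : set R)) (2^-1 : R)%:E)%E.
  exact (ge0_integralD (@lebesgue_measure R) mD kS0 (measurable_funeM _ mS) c0 (measurable_cst _)).
rewrite (ge0_integralZl_EFin (@lebesgue_measure R) mD (fun x _ => S0 x) mS k0).
rewrite (ge0_integral_sum (@lebesgue_measure R) mD mG (fun i x _ => G0i i x)).
rewrite (integral_cst (@lebesgue_measure R) mD).
have hmu : (@lebesgue_measure R (`[0%R, 1%R] : set R)) = 1%E.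
  by rewrite lebesgue_measure_itv /= lte01 oppr0 adde0.
rewrite [X in (_ + _ * X <= _)%E]hmu mule1.
have hI i : (\int[@mu R]_(x in (`[0%R, 1%R] : set R)) (a i * M (`|xs i x| / 2))%:E
    <= (a i)%:E)%E.
  case: (a01 i) => ->.
    rewrite (_ : (fun x => _) = (fun x => 0%E)); first by rewrite integral0.
    by apply/funext => x; rewrite mul0r.
  rewrite (_ : (fun x => _) = (fun x => (M (`|xs i x| / 2))%:E)); first exact: h2.
  by apply/funext => x; rewrite mul1r.
apply: (@le_trans _ _ ((2^-1 / n%:R)%:E * (minn m n)%:R%:E + (2^-1)%:E)%E).
  apply: leeD => //; apply: lee_wpmul2l; first by rewrite lee_fin.
  by rewrite -sum_ind -sumEFin; apply: lee_sum => i _; exact: hI.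
rewrite -EFinM -EFinD lee_fin.
have hmn : (minn m n)%:R <= n%:R :> R by rewrite ler_nat geq_minr.
have kn : n%:R^-1 * n%:R = 1 :> R by rewrite mulVf // gt_eqF.
have ki : 0 <= n%:R^-1 :> R by rewrite invr_ge0 ler0n.
move: kn ki hmn; set k := n%:R^-1; set q := (minn m n)%:R; set p := n%:R => kn ki hmn.
nra.
Qed.
Lemma int_ind (R : realType) (M : R -> R) (a b K l : R) :
  orlicz_function M -> 0 <= a -> a <= b -> b <= 1 -> 0 <= K -> 0 < l ->
  (\int[@mu R]_(x in (`[0%R, 1%R] : set R)) (M (`|K * \1_(`[a, b[ : set R) x| / l))%:E
   = (M (K / l) * (b - a))%:E)%E.
Proof.
move=> oM a0 ab b1 K0 l0.
have M0 : M 0 = 0 by case: oM.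
have mD : measurable (`[0%R, 1%R] : set R) by exact: measurable_itv.
have mA : measurable (`[a, b[ : set R) by exact: measurable_itv.
transitivity (\int[@lebesgue_measure R]_(x in (`[0%R, 1%R] : set R))
   ((M (K / l))%:E * (\1_(`[a, b[ : set R) x)%:E))%E.
  apply: eq_integral => x _; rewrite -EFinM; congr EFin; rewrite indicE.
  case: (x \in _) => /=; first by rewrite !mulr1 ger0_norm.
  by rewrite !mulr0 normr0 mul0r M0.
rewrite (ge0_integralZl_EFin (@lebesgue_measure R) mD) //; first last.
- by apply: (Mge0 oM); rewrite divr_ge0 // ltW.
- apply/measurable_EFinP; exact: measurable_indic.
rewrite integral_indic // setIidl; last first.
  move=> x /=; rewrite !in_itv /= => /andP[ax xb]; apply/andP; split.
    exact: le_trans ax.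
  by apply: ltW; apply: lt_le_trans b1.
have hA := @lebesgue_measure_itv R `[a, b[.
rewrite /= in hA.
rewrite [X in (_ * X)%E = _]hA lte_fin.
case: ltP => h; first by rewrite -EFinD -EFinM.
have -> : b = a by apply: le_anti; rewrite ab h.
by rewrite mule0 subrr mulr0.
Qed.
Lemma sum_ind_itv (R : realType) (s x : R) (k : nat) : 0 <= s ->
  \sum_(i < k) (\1_(`[i%:R * s, i.+1%:R * s[ : set R) x : R) =
  \1_(`[0, k%:R * s[ : set R) x.
Proof.
move=> s0; elim: k => [|k IH].
  rewrite big_ord0 indicE mem_setE in_itv /= mul0r.
  by case: (lerP 0 x) => h //=; rewrite ltNge h.
rewrite big_ord_recr /= IH !indicE !mem_setE !in_itv /=.
have hk : k%:R * s <= k.+1%:R * s by rewrite ler_wpM2r // ler_nat.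
have [h1|h1] := lerP 0 x; have [h2|h2] := ltrP x (k%:R * s);
  have [h3|h3] := ltrP x (k.+1%:R * s) => /=; rewrite ?addr0 ?add0r //.
- exfalso; lra.
- have : 0 <= k%:R * s by rewrite mulr_ge0.
  move=> ?; exfalso; lra.
Qed.
Lemma lower (R : realType) (M Minv : R -> R) (n : nat) (v : R) :
  orlicz_function M -> is_inverse_on_nonneg M Minv -> (1 <= n)%N -> 1 <= v ->
  ((Minv (v * n%:R) / Minv v)%:E <= phi_U M n)%E.
Proof.
move=> oM iM n1 v1.
have n0 : 0 < n%:R :> R by rewrite ltr0n.
have v0 : 0 < v by apply: lt_le_trans v1.
have vn0 : 0 < v * n%:R by rewrite mulr_gt0.
set C := Minv (v * n%:R).
set s := (v * n%:R)^-1.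
have s0 : 0 < s by rewrite invr_gt0.
have C0 : 0 < C by exact: (Minv_gt0 oM iM vn0).
have MC : M C = v * n%:R by have [_ _ ->] := iM _ (ltW vn0).
have ns : n%:R * s = v^-1 by rewrite /s invfM mulrC -mulrA mulVf ?gt_eqF // mulr1.
have vi1 : v^-1 <= 1 by rewrite invf_le1.
pose xs : 'I_n -> R -> R := fun i x => C * \1_(`[i%:R * s, i.+1%:R * s[ : set R) x.
have hb (i : 'I_n) : i.+1%:R * s <= 1.
  apply: le_trans vi1; rewrite -ns; apply: ler_wpM2r; [exact: ltW|rewrite ler_nat; exact: ltn_ord].
have mod_i (i : 'I_n) l : 0 < l -> modular_le1 M (xs i) l <-> M (C / l) * s <= 1.
  move=> l0; rewrite /modular_le1 /xs int_ind //.
  - by rewrite lee_fin; have -> : i.+1%:R * s - i%:R * s = s by rewrite -natr1; ring.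
  - by rewrite mulr_ge0 // ltW.
  - by apply: ler_wpM2r; [exact: ltW|rewrite ler_nat].
  - exact: ltW.
have MC1 : M C * s = 1 by rewrite MC /s mulfV // gt_eqF.
have dn : disjoint_normalized M xs.
  split.
  - move=> i; split.
      split.
        apply: measurable_funM; first exact: measurable_cst.
        exact: measurable_indic.
      by exists 1; split => //; apply/(mod_i i 1 ltr01); rewrite divr1 MC1.
    rewrite /lux_norm; apply: le_anti; apply/andP; split.
      apply: ge_inf.
        by exists 0 => y [y0 _]; exact: ltW.
      by split => //; apply/(mod_i i 1 ltr01); rewrite divr1 MC1.
    apply: lb_le_inf.
      by exists 1; split => //; apply/(mod_i i 1 ltr01); rewrite divr1 MC1.
    move=> l [l0 /(mod_i i l l0) hl].
    have : M (C / l) <= v * n%:R by rewrite -(ler_pM2r s0) {2}/s mulfV ?gt_eqF.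
    move=> /(Mlt_inv oM iM) h.
    have := h (divr_ge0 (ltW C0) (ltW l0)) (ltW vn0).
    by rewrite -/C ler_pdivrMr // ler_pMr.
  - move=> i j ij.
    have inA (k : 'I_n) x : xs k x != 0 -> k%:R * s <= x < k.+1%:R * s.
      rewrite /xs indicE mem_setE in_itv /=.
      by case: (_ && _) => //; rewrite mulr0 eqxx.
    exists set0; split => //.
    move=> x [_ [/inA hi /inA hj]].
    move: hi hj => /andP[hi1 hi2] /andP[hj1 hj2].
    case: (ltngtP i j) => hij.
    + have : i.+1%:R * s <= j%:R * s by apply: ler_wpM2r; [exact: ltW|rewrite ler_nat].
      move=> ?; lra.
    + have : j.+1%:R * s <= i%:R * s by apply: ler_wpM2r; [exact: ltW|rewrite ler_nat].
      move=> ?; lra.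
    + by move: ij; rewrite (val_inj hij) eqxx.
rewrite /phi_U /XU_norm.
apply: le_ereal_sup_tmp.
exists (XU_n_norm M n (fun i => if (i < n)%N then 1 else 0)); first by exists n.
rewrite /XU_n_norm; apply: le_ereal_sup_tmp.
exists (lux_norm M (fun x => \sum_(i < n) (if (i < n)%N then 1 else 0) * xs i x))%:E.
  by exists xs.
rewrite lee_fin.
have fsum : (fun x => \sum_(i < n) (if (i < n)%N then 1 else 0) * xs i x) =
    (fun x => C * \1_(`[0, n%:R * s[ : set R) x).
  apply/funext => x; under eq_bigr do rewrite ltn_ord mul1r.
  by rewrite /xs -mulr_sumr sum_ind_itv // ltW.
rewrite fsum /lux_norm.
have Mv0 : 0 < Minv v by exact: (Minv_gt0 oM iM v0).
have MMv : M (Minv v) = v by have [_ _ ->] := iM _ (ltW v0).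
have modf l : 0 < l -> modular_le1 M (fun x => C * \1_(`[0, n%:R * s[ : set R) x) l
    <-> M (C / l) * v^-1 <= 1.
  move=> l0; rewrite /modular_le1 int_ind // ?subr0 ?ns ?lee_fin //.
  - by rewrite invr_ge0 ltW.
  - exact: ltW.
apply: lb_le_inf.
  exists (C / Minv v); split; first by rewrite divr_gt0.
  apply/modf; first by rewrite divr_gt0.
  by rewrite invf_div mulrCA mulfV ?gt_eqF // mulr1 MMv mulfV ?gt_eqF.
move=> l [l0 /(modf l l0) hl].
have vi0 : 0 < v^-1 by rewrite invr_gt0.
have : M (C / l) <= v by rewrite -(ler_pM2r vi0) mulfV ?gt_eqF.
move=> /(Mlt_inv oM iM) h.
have := h (divr_ge0 (ltW C0) (ltW l0)) (ltW v0).
by rewrite ler_pdivrMr // ler_pdivrMr // mulrC.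
Qed.
Theorem mainTheorem19 (R : realType) (M Minv : R -> R) :
  orlicz_function M -> Delta2_infty M -> is_inverse_on_nonneg M Minv ->
  exists c : R, 0 < c /\
    forall n : nat, (1 <= n)%N ->
      ((c^-1)%:E * Phi Minv n%:R <= phi_U M n)%E /\
      (phi_U M n <= c%:E * Phi Minv n%:R)%E.
Proof.
move=> oM _ iM; exists 4; split => // n n1.
have n0 : 0 < n%:R :> R by rewrite ltr0n.
have memS v : 1 <= v -> [set (Minv (v * n%:R) / Minv v)%:E | v in
    [set v | Num.max 1 (n%:R)^-1 <= v]] (Minv (v * n%:R) / Minv v)%:E.
  move=> v1; exists v => //=; rewrite ge_max v1 /=.
  by apply: le_trans v1; rewrite invf_le1 // ler1n.
have hP0 := ereal_sup_ubound (memS 1 (lexx 1)).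
rewrite mul1r (Minv1 oM iM) divr1 in hP0.
have Mn0 : 0 < Minv n%:R by exact: (Minv_gt0 oM iM n0).
have P0 : (0 <= Phi Minv n%:R)%E.
  by apply: le_trans hP0; rewrite lee_fin ltW.
split.
- have hPle : (Phi Minv n%:R <= phi_U M n)%E.
    apply: ge_ereal_sup => _ [v /= hv <-].
    apply: lower => //; by move: hv; rewrite ge_max => /andP[].
  apply: le_trans hPle; move: P0; case: (Phi Minv n%:R) => [r|_|//].
  + by rewrite lee_fin => r0; rewrite -EFinM lee_fin; lra.
  + by rewrite gt0_muley ?lte_fin ?invr_gt0.
- move: P0 hP0; rewrite /Phi.
  set S := [set _ | _ in _].
  have hub : forall v, 1 <= v -> ((Minv (v * n%:R) / Minv v)%:E <= ereal_sup S)%E.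
    by move=> v v1; apply: ereal_sup_ubound; exact: memS.
  case: (ereal_sup S) hub => [r hub _ hP0|_ _ _|_ P0 _]; last 2 first.
  + by rewrite gt0_muley ?lte_fin // leey.
  + by move: P0; rewrite leeNy_eq.
  rewrite lee_fin in hP0.
  have r0 : 0 < r by apply: lt_le_trans hP0.
  have hr w : 1 <= w -> Minv (w * n%:R) / Minv w <= r.
    by move=> w1; have := hub w w1; rewrite lee_fin.
  rewrite -EFinM.
  apply: ge_ereal_sup => _ [m _ <-].
  apply: ge_ereal_sup => _ [xs /= dn <-].
  rewrite lee_fin.
  exact: (upper oM iM n1 r0 hr dn).
Qed.
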